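(* For every $k\ge3$, the distribution $P_{k\text{-BAL}}$ satisfies SYM, BAL, MIN and UNI.
   Context: $\Omega=\{\pm1\}$, $q=2$, $k\ge3$. Let $\lambda=\lambda(k)\in(0,1)$ be the unique root in $(0,1)$ of $(1-\lambda)(1+\lambda)^{k-1}-1=0$. For $\tau\in\Omega^k$ let $\psi_\tau(\sigma)=\lambda^{\sum_{j=1}^k\mathbf 1\{\sigma_j=\tau_j\}}\big(1-\prod_{i=1}^k\mathbf 1\{\sigma_i=-\tau_i\}\big)$, and let $P_{k\text{-BAL}}$ be the uniform distribution on these $2^k$ functions. $\boldsymbol\psi$ denotes a sample from $P=P_{k\text{-BAL}}$, $\xi=q^{-k}\sum_{\sigma\in\Omega^k}\mathbb E[\boldsymbol\psi(\sigma)]$, $\psi^\theta(\sigma)=\psi(\sigma_{\theta(1)},\dots,\sigma_{\theta(k)})$. SYM: for all $i\in[k]$, $\omega\in\Omega$, $\psi$ in the support, $\sum_{\tau\in\Omega^k}\mathbf 1\{\tau_i=\omega\}\psi(\tau)=q^{k-1}\xi$, and $P(\psi)=P(\psi^\theta)$ for every permutation $\theta$. BAL: $\phi(\mu)=\sum_{\tau\in\Omega^k}\mathbb E[\boldsymbol\psi(\tau)]\prod_{i=1}^k\mu(\tau_i)$ is concave on distributions $\mu$ on $\Omega$ and maximised at the uniform distribution. MIN: among distributions $\rho$ on $\Omega\times\Omega$ with both marginals uniform, $\varphi(\rho)=\sum_{\sigma,\tau\in\Omega^k}\mathbb E[\boldsymbol\psi(\sigma)\boldsymbol\psi(\tau)]\prod_{i=1}^k\rho(\sigma_i,\tau_i)$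 has the uniform distribution as unique global minimiser. UNI: every CSP with constraint functions from the support of $P$ (constraint $a$ on a $k$-tuple $\partial a$ of variables) in which each constraint has pairwise distinct variables and whose bipartite variable–constraint graph is unicyclic admits $\sigma$ with $\prod_a\psi_a(\sigma(\partial a))>0$. *)

(* Defs.v *)
(* Omega = {+1,-1} is encoded as bool (true = +1, false = -1),
   so that "-omega" is "~~ omega". *)
From HB Require Import structures.
From mathcomp Require Import all_boot all_order all_algebra perm.
Set Implicit Arguments. Unset Strict Implicit. Unset Printing Implicit Defensive.
Import Order.TTheory GRing.Theory Num.Theory.
Local Open Scope ring_scope.

Definition Sig (k : nat) := {ffun 'I_k -> bool}.
Definition Fn (R : rcfType) (k : nat) := {ffun Sig k -> R}.

Section KBal.
Variables (R : rcfType) (k : nat) (lam : R).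

Definition psi_tau (tau : Sig k) : Fn R k :=
  [ffun sigma : Sig k =>
     lam ^+ (\sum_(j < k) (sigma j == tau j))%N
     * (1 - \prod_(i < k) ((sigma i == ~~ tau i)%:R : R))].

(* P_{k-BAL}: uniform distribution on the 2^k functions psi_tau;
   probability mass of a function psi. *)
Definition Pk (psi : Fn R k) : R :=
  (#|[set tau : Sig k | psi_tau tau == psi]|)%:R / (2 ^ k)%:R.

Definition Epsi (F : Fn R k -> R) : R :=
  (2 ^ k)%:R^-1 * \sum_(tau : Sig k) F (psi_tau tau).

Definition xi : R := (2 ^ k)%:R^-1 * \sum_(sigma : Sig k) Epsi (fun psi => psi sigma).

Definition psi_perm (psi : Fn R k) (theta : 'S_k) : Fn R k :=
  [ffun sigma : Sig k => psi [ffun i => sigma (theta i)]].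

Definition SYM : Prop :=
  (forall (i : 'I_k) (omega : bool) (psi : Fn R k), 0 < Pk psi ->
     \sum_(tau : Sig k | tau i == omega) psi tau = (2 ^ k.-1)%:R * xi)
  /\ (forall (psi : Fn R k) (theta : 'S_k), Pk psi = Pk (psi_perm psi theta)).

Definition is_dist1 (mu : {ffun bool -> R}) : Prop :=
  (forall w, 0 <= mu w) /\ \sum_(w : bool) mu w = 1.
Definition unif1 : {ffun bool -> R} := [ffun _ => 2%:R^-1].

Definition phi1 (mu : {ffun bool -> R}) : R :=
  \sum_(tau : Sig k) Epsi (fun psi => psi tau) * \prod_(i < k) mu (tau i).

Definition BAL : Prop :=
  (forall (mu nu : {ffun bool -> R}) (t : R), is_dist1 mu -> is_dist1 nu ->
     0 <= t <= 1 ->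
     t * phi1 mu + (1 - t) * phi1 nu <= phi1 [ffun w => t * mu w + (1 - t) * nu w])
  /\ (forall mu, is_dist1 mu -> phi1 mu <= phi1 unif1).

Definition is_dist2_unif_marg (rho : {ffun bool * bool -> R}) : Prop :=
  (forall w, 0 <= rho w) /\ \sum_(w : bool * bool) rho w = 1
  /\ (forall w, \sum_(w' : bool) rho (w, w') = 2%:R^-1)
  /\ (forall w, \sum_(w' : bool) rho (w', w) = 2%:R^-1).
Definition unif2 : {ffun bool * bool -> R} := [ffun _ => 4%:R^-1].

Definition phi2 (rho : {ffun bool * bool -> R}) : R :=
  \sum_(sigma : Sig k) \sum_(tau : Sig k)
     Epsi (fun psi => psi sigma * psi tau) * \prod_(i < k) rho (sigma i, tau i).

Definition MIN : Prop :=
  is_dist2_unif_marg unif2 /\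
  (forall rho, is_dist2_unif_marg rho -> rho <> unif2 -> phi2 unif2 < phi2 rho).

(* Factor graphs: n variables 'I_n, m constraints 'I_m; constraint a has
   constraint function psi_a and variable tuple dd a : 'I_k -> 'I_n. *)
Definition fg_vertex (n m : nat) := ('I_n + 'I_m)%type.

Definition fg_adj (n m : nat) (dd : 'I_m -> 'I_k -> 'I_n)
  : rel (fg_vertex n m) :=
  fun u v => match u, v with
  | inl x, inr a => x \in codom (dd a)
  | inr a, inl x => x \in codom (dd a)
  | _, _ => false
  end.

End KBal.

Section Graph.
Variables (V : finType) (e : rel V).
Definition connected_graph : Prop := forall u v : V, connect e u v.
Definition is_graph_cycle (c : seq V) : Prop := [/\ uniq c, (3 <= size c)%N & path.cycle e c].
Definition cycle_edges (c : seq V) : {set {set V}} :=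
  [set [set x; next c x] | x in c].
Definition unicyclic : Prop :=
  connected_graph /\ (exists c, is_graph_cycle c) /\
  (forall c c', is_graph_cycle c -> is_graph_cycle c' -> cycle_edges c = cycle_edges c').
End Graph.

Definition UNI (R : rcfType) (k : nat) (lam : R) : Prop :=
  forall (n m : nat) (psi : 'I_m -> Fn R k) (dd : 'I_m -> 'I_k -> 'I_n),
    (forall a, 0 < Pk lam (psi a)) ->
    (forall a, injective (dd a)) ->
    unicyclic (fg_adj dd) ->
    exists sigma : 'I_n -> bool,
      0 < \prod_(a < m) psi a [ffun i => sigma (dd a i)].

(* Main.v *)
Require Import Defs.
From HB Require Import structures.
From mathcomp Require Import all_boot all_order all_algebra perm.
From mathcomp Require Import ring lra.
Set Implicit Arguments. Unset Strict Implicit. Unset Printing Implicit Defensive.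
Import Order.TTheory GRing.Theory Num.Theory.
Local Open Scope ring_scope.

Lemma psiE (R : rcfType) (k : nat) (lam : R) (tau sigma : Sig k) :
  psi_tau lam tau sigma =
  \prod_i lam ^+ (sigma i == tau i) - \prod_i ((sigma i == ~~ tau i)%:R : R).
Proof.
rewrite ffunE expr_sum mulrBr mulr1; congr (_ - _).
rewrite -big_split /=; apply: eq_bigr => i _.
by case: (sigma i); case: (tau i); rewrite ?mulr1 ?mulr0 ?expr0 ?mul1r.
Qed.

Lemma G1 (R : rcfType) (k : nat) (F : 'I_k -> bool -> R) :
  \sum_(s : Sig k) \prod_i F i (s i) = \prod_i \sum_b F i b.
Proof. by rewrite bigA_distr_bigA. Qed.

Lemma G2 (R : rcfType) (k : nat) (F : 'I_k -> bool -> bool -> R) :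
  \sum_(s : Sig k) \sum_(t : Sig k) \prod_i F i (s i) (t i) =
  \prod_i \sum_x \sum_y F i x y.
Proof.
rewrite -G1; apply: eq_bigr => s _.
by rewrite (G1 (fun i y => F i (s i) y)).
Qed.

Lemma card_Sig (k : nat) : #|{: Sig k}| = (2 ^ k)%N.
Proof. by rewrite card_ffun card_bool card_ord. Qed.

Lemma avg_const (R : rcfType) (k : nat) (c : R) :
  (2 ^ k)%:R^-1 * \sum_(t : Sig k) c = c.
Proof.
rewrite sumr_const card_Sig -mulr_natr.
have N0 : (2 ^ k)%:R != 0 :> R by rewrite pnatr_eq0 expn_eq0.
by field.
Qed.

Lemma sum_psi_sigma (R : rcfType) (k : nat) (lam : R) (tau : Sig k) :
  \sum_(sigma : Sig k) psi_tau lam tau sigma = (1 + lam) ^+ k - 1.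
Proof.
under eq_bigr do rewrite psiE.
rewrite sumrB (G1 (fun i b => lam ^+ (b == tau i)))
  (G1 (fun i b => ((b == ~~ tau i)%:R : R))).
rewrite (eq_bigr (fun _ => 1 + lam)); last first.
  by move=> i _; rewrite big_bool /=; case: (tau i); rewrite /= ?expr1 ?expr0 // addrC.
rewrite (eq_bigr (fun _ => 1)); last first.
  by move=> i _; rewrite big_bool /=; case: (tau i); rewrite /= ?addr0 ?add0r.
by rewrite big1_eq prodr_const card_ord.
Qed.

Lemma sum_psi_tau (R : rcfType) (k : nat) (lam : R) (sigma : Sig k) :
  \sum_(tau : Sig k) psi_tau lam tau sigma = (1 + lam) ^+ k - 1.
Proof.
under eq_bigr do rewrite psiE.
rewrite sumrB (G1 (fun i b => lam ^+ (sigma i == b)))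
  (G1 (fun i b => ((sigma i == ~~ b)%:R : R))).
rewrite (eq_bigr (fun _ => 1 + lam)); last first.
  by move=> i _; rewrite big_bool /=; case: (sigma i); rewrite /= ?expr1 ?expr0 // addrC.
rewrite (eq_bigr (fun _ => 1)); last first.
  by move=> i _; rewrite big_bool /=; case: (sigma i); rewrite /= ?addr0 ?add0r.
by rewrite big1_eq prodr_const card_ord.
Qed.

Lemma Epsi_sig (R : rcfType) (k : nat) (lam : R) (sigma : Sig k) :
  Epsi lam (fun psi => psi sigma) = (2 ^ k)%:R^-1 * ((1 + lam) ^+ k - 1).
Proof. by rewrite /Epsi sum_psi_tau. Qed.

Lemma xiE (R : rcfType) (k : nat) (lam : R) :
  xi k lam = (2 ^ k)%:R^-1 * ((1 + lam) ^+ k - 1).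
Proof. by rewrite /xi; under eq_bigr do rewrite Epsi_sig; rewrite avg_const. Qed.

Lemma G1_filter (R : rcfType) (k : nat) (F : 'I_k -> bool -> R) (i : 'I_k) (w : bool) :
  \sum_(s : Sig k | s i == w) \prod_j F j (s j) = F i w * \prod_(j | j != i) \sum_b F j b.
Proof.
pose F' j b := if j == i then (if b == w then F j b else 0) else F j b.
rewrite big_mkcond /=.
transitivity (\sum_(s : Sig k) \prod_j F' j (s j)).
  apply: eq_bigr => s _; rewrite [RHS](bigD1 i) //= [in RHS]/F' eqxx.
  have -> : \prod_(j | j != i) F' j (s j) = \prod_(j | j != i) F j (s j).
    by apply: eq_bigr => j ji; rewrite /F' (negbTE ji).
  case: eqP => [_|_]; last by rewrite mul0r.
  by rewrite (bigD1 i).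
rewrite G1 (bigD1 i) //= {1}/F' eqxx big_bool /=.
have -> : \prod_(j | j != i) \sum_b F' j b = \prod_(j | j != i) \sum_b F j b.
  by apply: eq_bigr => j ji; rewrite /F' (negbTE ji).
by clear F'; case: w; rewrite /= ?addr0 ?add0r ?eqxx.
Qed.

Lemma Pk_supp (R : rcfType) (k : nat) (lam : R) (psi : Fn R k) :
  0 < Pk lam psi -> exists tau, psi_tau lam tau = psi.
Proof.
rewrite /Pk; case: (posnP #|[set tau | psi_tau lam tau == psi]|) => [->|].
  by rewrite mul0r ltxx.
by case/card_gt0P => tau; rewrite inE => /eqP <- _; exists tau.
Qed.

Lemma prod_neq_const (R : rcfType) (k : nat) (i : 'I_k) (c : R) :
  \prod_(j | j != i) c = c ^+ k.-1.
Proof. by rewrite prodr_const cardC1 card_ord. Qed.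

Lemma sym1 (R : rcfType) (k : nat) (lam : R) :
  (0 < k)%N -> (1 - lam) * (1 + lam) ^+ k.-1 - 1 = 0 ->
  forall (i : 'I_k) (omega : bool) (psi : Fn R k), 0 < Pk lam psi ->
     \sum_(tau : Sig k | tau i == omega) psi tau = (2 ^ k.-1)%:R * xi k lam.
Proof.
move=> k0 H i w psi /Pk_supp [t0 <-].
under eq_bigr do rewrite psiE.
rewrite sumrB (G1_filter (fun j b => lam ^+ (b == t0 j)))
  (G1_filter (fun j b => ((b == ~~ t0 j)%:R : R))).
rewrite (eq_bigr (fun _ => 1 + lam)); last first.
  by move=> j _; rewrite big_bool /=; case: (t0 j); rewrite /= ?expr1 ?expr0 // addrC.
rewrite (eq_bigr (fun _ => 1)); last first.
  by move=> j _; rewrite big_bool /=; case: (t0 j); rewrite /= ?addr0 ?add0r.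
rewrite !prod_neq_const expr1n mulr1 xiE.
clear psi; case: k k0 i t0 H => [//|k'] _ i t0 /= H.
have N0 : (2 ^ k')%:R != 0 :> R by rewrite pnatr_eq0 expn_eq0.
rewrite expnS natrM exprS.
have hN Y : (2 ^ k')%:R * ((2 * (2 ^ k')%:R)^-1 * Y) = Y / 2 :> R by field.
rewrite hN; set X := (1 + lam) ^+ k' in H *.
case: (w =P t0 i) => [<-|/eqP wt].
  have -> : (w == ~~ w) = false by case: w.
  rewrite /= expr1 subr0; lra.
have -> : (w == ~~ t0 i) = true by move: wt; case: w; case: (t0 i).
rewrite /= expr0 mul1r; lra.
Qed.

Lemma psi_perm_tau (R : rcfType) (k : nat) (lam : R) (tau : Sig k) (th : 'S_k) :
  psi_perm (psi_tau lam tau) th = psi_tau lam [ffun i => tau ((th^-1)%g i)].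
Proof.
apply/ffunP => s; rewrite !ffunE.
congr (_ ^+ _ * (1 - _)).
- rewrite [RHS](reindex_inj (@perm_inj _ th)) /=; apply: eq_bigr => j _.
  by rewrite !ffunE permK.
- rewrite [RHS](reindex_inj (@perm_inj _ th)) /=; apply: eq_bigr => j _.
  by rewrite !ffunE permK.
Qed.

Lemma psi_perm_inv (R : rcfType) (k : nat) (psi : Fn R k) (th : 'S_k) :
  psi_perm (psi_perm psi th) (th^-1)%g = psi.
Proof.
apply/ffunP => s; rewrite !ffunE; congr (psi _).
by apply/ffunP => i; rewrite !ffunE permK.
Qed.

Lemma card_le_perm (R : rcfType) (k : nat) (lam : R) (psi : Fn R k) (th : 'S_k) :
  (#|[set t | psi_tau lam t == psi]| <=
   #|[set t | psi_tau lam t == psi_perm psi th]|)%N.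
Proof.
pose g (t : Sig k) : Sig k := [ffun i => t ((th^-1)%g i)].
have ginj : injective g.
  move=> t1 t2 E; apply/ffunP => i.
  by have := congr1 (fun f : Sig k => f (th i)) E; rewrite /g !ffunE permK.
rewrite -(card_imset _ ginj); apply: subset_leq_card.
apply/subsetP => t' /imsetP [t]; rewrite !inE => /eqP tE ->.
by rewrite /g -psi_perm_tau tE.
Qed.

Lemma Pk_perm (R : rcfType) (k : nat) (lam : R) (psi : Fn R k) (th : 'S_k) :
  Pk lam psi = Pk lam (psi_perm psi th).
Proof.
rewrite /Pk; congr (_%:R / _); apply/eqP; rewrite eqn_leq card_le_perm /=.
by have := card_le_perm lam (psi_perm psi th) (th^-1)%g; rewrite psi_perm_inv.
Qed.

Definition Qg (R : rcfType) (k : nat) (s : R) := \sum_(j < k) (1 + s) ^+ j.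

Lemma Qg_geo (R : rcfType) (k : nat) (s : R) : (1 + s) ^+ k = 1 + s * Qg k s.
Proof.
elim: k => [|k IH]; first by rewrite /Qg big_ord0 mulr0 addr0 expr0.
rewrite /Qg big_ord_recr /= exprSr IH -/(Qg k s); ring.
Qed.

Lemma bernoulli (R : rcfType) (j : nat) (x : R) : -1 <= x -> 1 + j%:R * x <= (1 + x) ^+ j.
Proof.
move=> hx; elim: j => [|j IH]; first by rewrite mul0r addr0 expr0.
rewrite exprSr -natr1.
have h1 : 0 <= 1 + x by lra.
have h2 : 0 <= j%:R * x * x :> R by rewrite -mulrA mulr_ge0 ?ler0n // -expr2 sqr_ge0.
have h3 := ler_wpM2r h1 IH.
set P := (1 + x) ^+ j in h3 *; set J := j%:R in h2 h3 *.
have -> : (1 + (J + 1) * x) = (1 + J * x) * (1 + x) - J * x * x by ring.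
set A := (1 + J * x) * (1 + x) in h3 *; set B := J * x * x in h2 *; set C := P * (1 + x) in h3 *.
lra.
Qed.

Lemma amgm_pow (R : rcfType) (j : nat) (a b c : R) :
  0 <= a -> 0 <= b -> 0 <= c -> c * c <= a * b -> 2 * c ^+ j <= a ^+ j + b ^+ j.
Proof.
move=> a0 b0 c0 h.
have hj : (c ^+ j) * (c ^+ j) <= a ^+ j * b ^+ j.
  rewrite -!exprMn; case: j => [|j]; first by rewrite !expr0.
  by rewrite ler_pXn2r // nnegrE ?mulr_ge0.
have A0 : 0 <= a ^+ j by rewrite exprn_ge0.
have B0 : 0 <= b ^+ j by rewrite exprn_ge0.
have C0 : 0 <= c ^+ j by rewrite exprn_ge0.
set A := a ^+ j in A0 hj *; set B := b ^+ j in B0 hj *; set C := c ^+ j in C0 hj *.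
rewrite -(@ler_pXn2r _ 2) // ?nnegrE; last 2 first.
- by rewrite mulr_ge0.
- by rewrite addr_ge0.
have E : (A + B) ^+ 2 - (2 * C) ^+ 2 = (A - B) ^+ 2 + 4 * (A * B - C * C) by ring.
have S : 0 <= (A - B) ^+ 2 by apply: sqr_ge0.
set X := (A + B) ^+ 2 in E *; set Y := (2 * C) ^+ 2 in E *; set Z := (A - B) ^+ 2 in E S.
set W := A * B in hj E; set V := C * C in hj E.
lra.
Qed.

Lemma sum_lin (R : rcfType) (u r : R) (n : nat) :
  \sum_(j < n.+1) ((0 < j)%N%:R * u - 2 * j%:R * u * r) = n%:R * u * (1 - n.+1%:R * r).
Proof.
elim: n => [|n IH]; first by rewrite big_ord1 /=; ring.
rewrite big_ord_recr /= IH -[n.+2]addn1 -[n.+1]addn1 !natrD /=; ring.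
Qed.

Lemma sum_strict (R : rcfType) (n : nat) (F G : 'I_n -> R) (j0 : 'I_n) :
  (forall j, F j <= G j) -> F j0 < G j0 -> \sum_j F j < \sum_j G j.
Proof.
move=> hle hlt; rewrite (bigD1 j0) //= [X in _ < X](bigD1 j0) //=.
by apply: ltr_leD => //; apply: ler_sum => j _.
Qed.

Lemma Qdiff (R : rcfType) (k : nat) (a b c : R) :
  Qg k a - 2 * Qg k b + Qg k c =
  \sum_(j < k) ((1 + a) ^+ j + (1 + c) ^+ j - 2 * (1 + b) ^+ j).
Proof.
rewrite /Qg mulr_sumr -sumrB -big_split /=; apply: eq_bigr => j _; ring.
Qed.

Lemma key_u (R : rcfType) (k : nat) (u r : R) :
  (2 <= k)%N -> 0 < r < 1 -> k%:R * r <= 1 -> -1 <= u <= 1 -> u != 0 ->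
  0 < u * (Qg k (u * r ^+ 2) - 2 * Qg k (u * r) + Qg k u).
Proof.
move=> k2 /andP[r0 r1] kr /andP[um1 u1] un0.
rewrite Qdiff.
have j1 : (1 < k)%N by [].
case: (ltrgtP u 0) => [ult|ugt|ue]; last by rewrite ue eqxx in un0.
-
  have hb : forall j : 'I_k, (1 + u * r ^+ 2) ^+ j + (1 + u) ^+ j - 2 * (1 + u * r) ^+ j
        <= (0 < j)%N%:R * u - 2 * j%:R * u * r.
    move=> [[|j] hj] /=.
      rewrite !expr0 mul0r !mulr0 mul0r; lra.
    have a0 : 0 <= 1 + u * r ^+ 2 by nra.
    have a1 : 1 + u * r ^+ 2 <= 1 by nra.
    have b0 : 0 <= 1 + u by lra.
    have b1 : 1 + u <= 1 by lra.
    have h1 : (1 + u * r ^+ 2) ^+ j.+1 <= 1 by apply: exprn_ile1.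
    have h2 : (1 + u) ^+ j.+1 <= 1 + u.
      rewrite exprS; have := exprn_ile1 j b0 b1 => h.
      have := ler_wpM2l b0 h; rewrite mulr1 //.
    have h3 : 1 + j.+1%:R * (u * r) <= (1 + u * r) ^+ j.+1 by apply: bernoulli; nra.
    set A := (1 + u * r ^+ 2) ^+ j.+1 in h1 *; set B := (1 + u) ^+ j.+1 in h2 *;
      set C := (1 + u * r) ^+ j.+1 in h3 *; set J := j.+1%:R in h3 *.
    have h3' : 1 + 2 * J * u * r <= 2 * C - 1.
      have -> : 2 * J * u * r = 2 * (J * (u * r)) by ring.
      lra.
    set Z := 2 * J * u * r in h3' *. lra.
  have hs : \sum_(j < k) ((1 + u * r ^+ 2) ^+ j + (1 + u) ^+ j - 2 * (1 + u * r) ^+ j)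
      < \sum_(j < k) ((0 < j)%N%:R * u - 2 * j%:R * u * r).
    apply: (sum_strict (j0 := Ordinal j1)) => // /=.
    have hur : u * r ^+ 2 < 0 by rewrite pmulr_llt0 ?exprn_gt0.
    rewrite !expr1 mul1r mulr1; set W := u * r ^+ 2 in hur *; lra.
  move: hs; case: k k2 kr j1 hb => [//|k'] k2 kr j1 hb; rewrite sum_lin => hs.
  have hk : k'%:R * u * (1 - k'.+1%:R * r) <= 0.
    rewrite -mulrA; apply: mulr_ge0_le0; first exact: ler0n.
    apply: mulr_le0_ge0; lra.
  set D := \sum_(j < k'.+1) _ in hs *.
  have hD : D < 0 by apply: (lt_le_trans hs).
  nra.
-
  apply: mulr_gt0 => //.
  have : \sum_(j < k) (0 : R) <
      \sum_(j < k) ((1 + u * r ^+ 2) ^+ j + (1 + u) ^+ j - 2 * (1 + u * r) ^+ j).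
    apply: (sum_strict (j0 := Ordinal j1)) => /=.
      have r20 : 0 <= r ^+ 2 by apply: sqr_ge0.
      have ur0 : 0 <= u * r ^+ 2 by apply: mulr_ge0; lra.
      have ur1 : 0 <= u * r by apply: mulr_ge0; lra.
      have hq : 0 <= u * (1 - r) ^+ 2 by apply: mulr_ge0; [lra | apply: sqr_ge0].
      move=> j; rewrite subr_ge0 [X in _ <= X]addrC; apply: amgm_pow; try lra.
    have hq : 0 < u * (1 - r) ^+ 2 by apply: mulr_gt0; [lra | apply: exprn_gt0; lra].
    rewrite !expr1.
    have -> : 1 + u * r ^+ 2 + (1 + u) - 2 * (1 + u * r) = u * (1 - r) ^+ 2 by ring.
    lra.
  by rewrite big1_eq.
Qed.

Definition Gf (R : rcfType) (k : nat) (lam a b : R) :=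
  (lam ^+ 2 * a + 2 * lam * b + a) ^+ k - 2 * (lam * b + a) ^+ k + a ^+ k.

Lemma lam_bound (R : rcfType) (k : nat) (lam : R) :
  (3 <= k)%N -> 0 < lam < 1 -> (1 - lam) * (1 + lam) ^+ k.-1 - 1 = 0 ->
  k%:R * (1 - lam) <= 1 + lam.
Proof.
case: k => [//|k'] k3 /andP[l0 l1] /= H.
have K2 : 2 <= k'%:R :> R by rewrite (ler_nat R 2 k').
have B := bernoulli k' (ltW (lt_trans (ltrN10 R) l0)).
set P := (1 + lam) ^+ k' in H B.
have h1 : (1 - lam) * (1 + k'%:R * lam) <= 1.
  have : (1 - lam) * (1 + k'%:R * lam) <= (1 - lam) * P by apply: ler_wpM2l; lra.
  lra.
set K := k'%:R in K2 B h1 *.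
have h2 : K - 1 - K * lam <= 0.
  have : lam * (K - 1 - K * lam) <= 0 by move: h1; rewrite -subr_ge0 => h; nra.
  rewrite pmulr_rle0 //.
have h3 : 0 <= 2 * lam - 1.
  have : 0 <= K * (2 * lam - 1) by nra.
  by rewrite pmulr_rge0 //; lra.
rewrite -natr1 -/K; nra.
Qed.

Lemma min_ineq (R : rcfType) (k : nat) (lam a b : R) :
  (3 <= k)%N -> 0 < lam < 1 -> (1 - lam) * (1 + lam) ^+ k.-1 - 1 = 0 ->
  0 <= a -> 0 <= b -> a + b = 2^-1 -> a != 4^-1 ->
  Gf k lam (4^-1) (4^-1) < Gf k lam a b.
Proof.
move=> k3 hl H a0 b0 ab an.
have kb := lam_bound k3 hl H.
case/andP: hl => l0 l1.
set C := 1 + lam; set D := 1 - lam.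
have C0 : 0 < C by rewrite /C; lra.
have D0 : 0 < D by rewrite /D; lra.
set r := D / C.
have r0 : 0 < r by rewrite divr_gt0.
have r1 : r < 1 by rewrite ltr_pdivrMr // mul1r /D /C; lra.
have Ckr : C ^+ k * r = 1.
  move: H; case: (k) k3 => [//|k'] _ /= H.
  have Cn : C != 0 by rewrite gt_eqF.
  have -> : C ^+ k'.+1 * r = D * C ^+ k' by rewrite exprS /r; field.
  move: H; rewrite -/C -/D; lra.
have kr : k%:R * r <= 1.
  by rewrite /r mulrA ler_pdivrMr // mul1r.
set u := 4 * a - 1.
have hu : -1 <= u <= 1 by apply/andP; split; rewrite /u; lra.
have un0 : u != 0.
  apply/eqP => u0; move/eqP: an; apply.
  have : a = 4^-1 * (u + 1) by rewrite /u; field.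
  by rewrite u0 add0r mulr1.
have rr : 0 < r < 1 by rewrite r0 r1.
have key := key_u (ltnW k3) rr kr hu un0.
have rn0 : r != 0 by rewrite gt_eqF.
have Cn : C != 0 by rewrite gt_eqF.
have Tinv : C ^+ k = r^-1.
  by rewrite -[C ^+ k]mulr1 -(mulfV rn0) mulrA Ckr mul1r.
have E : forall a' b', a' + b' = 2^-1 ->
    r ^+ 2 * (4 ^+ k * Gf k lam a' b') = (1 - r) ^+ 2 + (4 * a' - 1) * r ^+ 2 *
    (Qg k ((4 * a' - 1) * r ^+ 2) - 2 * Qg k ((4 * a' - 1) * r) + Qg k (4 * a' - 1)).
  move=> a' b' ab'.
  have bE : b' = 2^-1 - a' by rewrite -ab'; ring.
  set v := 4 * a' - 1.
  have e1 : 4 * (lam ^+ 2 * a' + 2 * lam * b' + a') = C ^+ 2 * (1 + v * r ^+ 2).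
    by rewrite bE /v /r /C /D; field.
  have e2 : 4 * (lam * b' + a') = C * (1 + v * r).
    by rewrite bE /v /r /C /D; field.
  have e3 : 4 * a' = 1 + v by rewrite /v; ring.
  have -> : 4 ^+ k * Gf k lam a' b' = (4 * (lam ^+ 2 * a' + 2 * lam * b' + a')) ^+ k
      - 2 * (4 * (lam * b' + a')) ^+ k + (4 * a') ^+ k.
    by rewrite /Gf !exprMn; ring.
  have T2 : (C ^+ 2) ^+ k = r^-1 ^+ 2 by rewrite exprAC Tinv.
  rewrite e1 e2 e3 [(C ^+ 2 * _) ^+ k]exprMn [(C * _) ^+ k]exprMn T2 Tinv.
  rewrite (Qg_geo k (v * r ^+ 2)) (Qg_geo k (v * r)) (Qg_geo k v).
  by field.
have E1 := E a b ab.
have E0 := E (4^-1) (4^-1) (ltac:(field)).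
have z : 4 * 4^-1 - 1 = 0 :> R by field.
rewrite -/u in E1; rewrite z !mul0r !addr0 in E0.
have p0 : 0 < r ^+ 2 * 4 ^+ k by rewrite mulr_gt0 // exprn_gt0 //.
have ee x : r ^+ 2 * 4 ^+ k * x = r ^+ 2 * (4 ^+ k * x) by rewrite mulrA.
rewrite -(ltr_pM2l p0) !ee E0 // E1 ltrDl.
by rewrite mulrAC mulr_gt0 // exprn_gt0.
Qed.

Lemma phi1E (R : rcfType) (k : nat) (lam : R) (mu : {ffun bool -> R}) :
  phi1 k lam mu = (2 ^ k)%:R^-1 * ((1 + lam) ^+ k - 1) * (\sum_w mu w) ^+ k.
Proof.
rewrite /phi1; under eq_bigr do rewrite Epsi_sig.
by rewrite -mulr_sumr (G1 (fun _ b => mu b)) prodr_const card_ord.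
Qed.

Lemma bal_main (R : rcfType) (k : nat) (lam : R) : BAL k lam.
Proof.
split.
- move=> mu nu t [_ hmu] [_ hnu] _; rewrite !phi1E.
  have -> : \sum_w [ffun w => t * mu w + (1 - t) * nu w] w = 1.
    transitivity (t * \sum_w mu w + (1 - t) * \sum_w nu w).
      by rewrite !big_bool /= !ffunE; ring.
    by rewrite hmu hnu; ring.
  rewrite hmu hnu expr1n mulr1.
  set K := (2 ^ k)%:R^-1 * _; have -> : t * K + (1 - t) * K = K by ring.
  exact: lexx.
- move=> mu [_ hmu]; rewrite !phi1E hmu.
  have -> : \sum_w unif1 R w = 1 by rewrite big_bool /= !ffunE; field.
  exact: lexx.
Qed.

Lemma sum_pair (R : rcfType) (F : bool * bool -> R) :
  \sum_(w : bool * bool) F w =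
  F (true, true) + F (true, false) + F (false, true) + F (false, false).
Proof.
rewrite (eq_bigr (fun p => F (p.1, p.2))); last by case.
rewrite -(pair_bigA _ (fun a b => F (a, b))) /= !big_bool /=; ring.
Qed.

Lemma prod3 (R : rcfType) (k : nat) (f g h : 'I_k -> R) :
  \prod_i f i * \prod_i g i * \prod_i h i = \prod_i (f i * g i * h i).
Proof. by rewrite -!big_split. Qed.

Lemma inner_phi2 (R : rcfType) (k : nat) (lam : R) (rho : {ffun bool * bool -> R})
  (a b : R) (t0 : Sig k) :
  rho (true, true) = a -> rho (false, false) = a ->
  rho (true, false) = b -> rho (false, true) = b ->
  \sum_(s : Sig k) \sum_(t : Sig k)
    (psi_tau lam t0 s * psi_tau lam t0 t * \prod_i rho (s i, t i)) = Gf k lam a b.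
Proof.
move=> rTT rFF rTF rFT.
pose fa (i : 'I_k) (x : bool) : R := lam ^+ (x == t0 i).
pose fb (i : 'I_k) (x : bool) : R := (x == ~~ t0 i)%:R.
pose X (f g : 'I_k -> bool -> R) (s t : Sig k) :=
  \prod_i (f i (s i) * g i (t i) * rho (s i, t i)).
have step : forall s t : Sig k,
    psi_tau lam t0 s * psi_tau lam t0 t * \prod_i rho (s i, t i) =
    X fa fa s t - X fa fb s t - X fb fa s t + X fb fb s t.
  move=> s t; rewrite !psiE /X -!prod3 -/(fa) /fa /fb; ring.
under eq_bigr do under eq_bigr do rewrite step.
under eq_bigr do rewrite !big_split /= ?sumrN.
rewrite !big_split /= ?sumrN /X.
rewrite (G2 (fun i x y => fa i x * fa i y * rho (x, y))).
rewrite (G2 (fun i x y => fa i x * fb i y * rho (x, y))).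
rewrite (G2 (fun i x y => fb i x * fa i y * rho (x, y))).
rewrite (G2 (fun i x y => fb i x * fb i y * rho (x, y))).
rewrite (eq_bigr (fun _ => lam ^+ 2 * a + 2 * lam * b + a)); last first.
  move=> i _; rewrite !big_bool /fa /=; case: (t0 i); rewrite /= rTT rFF rTF rFT; ring.
rewrite (eq_bigr (fun _ => lam * b + a) (F1 := fun i => \sum_x \sum_y fa i x * fb i y * rho (x, y))); last first.
  move=> i _; rewrite !big_bool /fa /fb /=; case: (t0 i); rewrite /= rTT rFF rTF rFT; ring.
rewrite (eq_bigr (fun _ => lam * b + a) (F1 := fun i => \sum_x \sum_y fb i x * fa i y * rho (x, y))); last first.
  move=> i _; rewrite !big_bool /fa /fb /=; case: (t0 i); rewrite /= rTT rFF rTF rFT; ring.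
rewrite (eq_bigr (fun _ => a) (F1 := fun i => \sum_x \sum_y fb i x * fb i y * rho (x, y))); last first.
  move=> i _; rewrite !big_bool /fa /fb /=; case: (t0 i); rewrite /= rTT rFF rTF rFT; ring.
rewrite !prodr_const !card_ord /Gf; ring.
Qed.

Lemma phi2E (R : rcfType) (k : nat) (lam : R) (rho : {ffun bool * bool -> R}) (a b : R) :
  rho (true, true) = a -> rho (false, false) = a ->
  rho (true, false) = b -> rho (false, true) = b ->
  phi2 k lam rho = Gf k lam a b.
Proof.
move=> rTT rFF rTF rFT; rewrite /phi2 /Epsi.
under eq_bigr do under eq_bigr do rewrite -mulrA big_distrl /=.
under eq_bigr do rewrite -mulr_sumr.
rewrite -mulr_sumr.
under eq_bigr do rewrite exchange_big /=.
rewrite exchange_big /=.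
under eq_bigr do rewrite (inner_phi2 lam _ rTT rFF rTF rFT).
by rewrite avg_const.
Qed.

Lemma marg_sym (R : rcfType) (rho : {ffun bool * bool -> R}) :
  is_dist2_unif_marg rho ->
  [/\ rho (false, false) = rho (true, true), rho (false, true) = rho (true, false),
      rho (true, true) + rho (true, false) = 2^-1,
      0 <= rho (true, true) & 0 <= rho (true, false)].
Proof.
move=> [h0 [_ [m1 m2]]].
have a := m1 true; have b := m1 false; have c := m2 true; have d := m2 false.
rewrite !big_bool /= in a b c d.
split; try lra; by apply: h0.
Qed.

Lemma min_main (R : rcfType) (k : nat) (lam : R) :
  (3 <= k)%N -> 0 < lam < 1 -> (1 - lam) * (1 + lam) ^+ k.-1 - 1 = 0 ->
  MIN k lam.
Proof.
move=> k3 hl H.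
have u2 : is_dist2_unif_marg (unif2 R).
  split; first by move=> w; rewrite ffunE invr_ge0 ler0n.
  split; first by rewrite sum_pair !ffunE; field.
  by split=> w; rewrite big_bool /= !ffunE; field.
split => // rho hr hne.
have [eFF eFT ab a0 b0] := marg_sym hr.
have -> : phi2 k lam (unif2 R) = Gf k lam 4^-1 4^-1 by apply: phi2E; rewrite ffunE.
rewrite (@phi2E R k lam rho (rho (true, true)) (rho (true, false))) //.
apply: min_ineq => //.
apply/eqP => aE; apply: hne; apply/ffunP => -[[] []]; rewrite !ffunE ?eFF ?eFT ?aE //.
- by move: ab; rewrite aE => ab'; apply/eqP; rewrite -(eqr_opp); apply/eqP; lra.
- by move: ab; rewrite aE => ab'; lra.
Qed.

Definition spath (V : eqType) (e : rel V) (A : pred V) (s : seq V) :=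
  [&& uniq s, all A s & sorted e s].

Lemma cycle_or_longer (V : eqType) (e : rel V) (A : pred V) :
  symmetric e -> irreflexive e ->
  (forall v, A v -> exists u w, [/\ u != w, A u, A w, e v u & e v w]) ->
  forall s, spath e A s -> s <> [::] ->
  (exists c, [/\ uniq c, (3 <= size c)%N & cycle e c]) \/
  (exists s', spath e A s' /\ size s' = (size s).+1).
Proof.
move=> esym eirr deg [//|x q] /and3P[] uq /= /andP[Ax Aq] pq _.
have [u [w [nuw Au Aw exu exw]]] := deg x Ax.
have [y [Ay exy yhd]] : exists y, [/\ A y, e x y & forall z q', q = z :: q' -> y != z].
  case: q {uq Aq pq} => [|z q]; first by exists u.
  case: (eqVneq u z) => [uz|uz].
    by exists w; split=> // z' q' [<- _]; rewrite -uz eq_sym.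
  by exists u; split=> // z' q' [<- _].
case yin: (y \in x :: q); last first.
  right; exists (y :: x :: q); split=> //.
  by apply/and3P; split; [rewrite cons_uniq yin uq | rewrite /= Ay Ax Aq | rewrite /= esym exy pq].
left.
have yx : y != x by apply/eqP => yx; move: exy; rewrite yx eirr.
have yq : y \in q by move: yin; rewrite inE (negbTE yx).
have j0 : (0 < index y q)%N.
  move: yq yhd; case: q {uq Aq pq yin} => // z q' _ yh.
  by rewrite /= eq_sym (negbTE (yh z q' erefl)).
have jlt : (index y q < size q)%N by rewrite index_mem.
exists (x :: rcons (take (index y q) q) y); split.
- have := take_uniq (index y q).+2 uq.
  by rewrite [take _ (_ :: _)]/= (take_nth y jlt) nth_index.
- by rewrite /= size_rcons size_takel ?(ltnW jlt).
- rewrite /cycle /= rcons_path last_rcons esym exy andbT.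
  have := take_path (index y q).+1 pq.
  by rewrite (take_nth y jlt) nth_index.
Qed.

Lemma mindeg2_cycle (V : finType) (e : rel V) (A : pred V) (x0 : V) :
  symmetric e -> irreflexive e -> A x0 ->
  (forall v, A v -> exists u w, [/\ u != w, A u, A w, e v u & e v w]) ->
  exists c, [/\ uniq c, (3 <= size c)%N & cycle e c].
Proof.
move=> esym eirr Ax0 deg.
suff H : forall n, (exists c, [/\ uniq c, (3 <= size c)%N & cycle e c]) \/
  (exists s, spath e A s /\ size s = n.+1).
  case: (H #|V|) => // [[s [/and3P[us _ _] sz]]].
  have := max_card (mem s); rewrite (card_uniqP us) sz ltnn //.
elim=> [|n [hc|[s [sp sz]]]].
- by right; exists [:: x0]; rewrite /spath /= Ax0.
- by left.
case: (cycle_or_longer esym eirr deg sp) => [sE|hc|[s' [sp' sz']]].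
- by rewrite sE in sz.
- by left.
- by right; exists s'; rewrite sz' sz.
Qed.

Definition Nr (n m k : nat) (dd : 'I_m -> 'I_k -> 'I_n) (x0 : 'I_n) (a0 : 'I_m)
  (a : 'I_m) : {set 'I_n} :=
  [set x | (x \in codom (dd a)) && ((a != a0) || (x != x0))].

Definition er (n m k : nat) (dd : 'I_m -> 'I_k -> 'I_n) (x0 : 'I_n) (a0 : 'I_m)
  : rel ('I_n + 'I_m) :=
  fun u v => match u, v with
  | inl x, inr a => x \in Nr dd x0 a0 a
  | inr a, inl x => x \in Nr dd x0 a0 a
  | _, _ => false
  end.

Lemma er_sym n m k (dd : 'I_m -> 'I_k -> 'I_n) x0 a0 : symmetric (er dd x0 a0).
Proof. by case=> [x|a] [y|b]. Qed.

Lemma er_irr n m k (dd : 'I_m -> 'I_k -> 'I_n) x0 a0 : irreflexive (er dd x0 a0).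
Proof. by case. Qed.

Lemma er_sub n m k (dd : 'I_m -> 'I_k -> 'I_n) x0 a0 :
  subrel (er dd x0 a0) (fg_adj dd).
Proof. by case=> [x|a] [y|b] //=; rewrite inE => /andP[]. Qed.

Lemma er_edge n m k (dd : 'I_m -> 'I_k -> 'I_n) x0 a0 c :
  cycle (er dd x0 a0) c -> [set inl x0; inr a0] \notin cycle_edges c.
Proof.
move=> cyc; apply/imsetP => -[u uc E].
have eu := next_cycle cyc uc.
have u1 : u \in [set inl x0; inr a0] by rewrite E !inE eqxx.
have u2 : next c u \in [set inl x0; inr a0] by rewrite E !inE eqxx orbT.
move: u2 eu; case/set2P: u1 => ->; case/set2P => -> //=;
  by rewrite inE !eqxx /= ?andbF ?orbF.
Qed.

Lemma Nr_two n m k (dd : 'I_m -> 'I_k -> 'I_n) x0 a0 a :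
  (3 <= k)%N -> injective (dd a) ->
  exists x1 x2, [/\ x1 != x2, x1 \in Nr dd x0 a0 a & x2 \in Nr dd x0 a0 a].
Proof.
move=> k3 inj.
have h0 : (0 < k)%N by apply: leq_trans k3.
have h1 : (1 < k)%N by apply: leq_trans k3.
have h2 : (2 < k)%N by [].
set y0 := dd a (Ordinal h0); set y1 := dd a (Ordinal h1); set y2 := dd a (Ordinal h2).
have d01 : y0 != y1 by apply/eqP => /inj /(congr1 val).
have d02 : y0 != y2 by apply/eqP => /inj /(congr1 val).
have d12 : y1 != y2 by apply/eqP => /inj /(congr1 val).
have inN y : y != x0 -> y \in codom (dd a) -> y \in Nr dd x0 a0 a.
  by move=> yx yc; rewrite inE yc yx orbT.
have c0 : y0 \in codom (dd a) by apply: codom_f.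
have c1 : y1 \in codom (dd a) by apply: codom_f.
have c2 : y2 \in codom (dd a) by apply: codom_f.
case: (eqVneq y0 x0) => [e0|n0].
  exists y1, y2; split => //; apply: inN => //; rewrite -e0 eq_sym //.
case: (eqVneq y1 x0) => [e1|n1].
  exists y0, y2; split => //; apply: inN => //; rewrite -e1 eq_sym //.
by exists y0, y1; split => //; apply: inN.
Qed.

Lemma private_nb n m k (dd : 'I_m -> 'I_k -> 'I_n) x0 a0 (S : {set 'I_m}) :
  (3 <= k)%N -> (forall a, injective (dd a)) ->
  (forall c, ~ [/\ uniq c, (3 <= size c)%N & cycle (er dd x0 a0) c]) ->
  S != set0 ->
  exists a x, [/\ a \in S, x \in Nr dd x0 a0 a &
     forall b, b \in S -> b != a -> x \notin Nr dd x0 a0 b].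
Proof.
move=> k3 inj nocyc S0.
case: (boolP [exists a in S, exists x in Nr dd x0 a0 a,
   [forall b in S, (b != a) ==> (x \notin Nr dd x0 a0 b)]]).
  case/exists_inP => a aS /exists_inP [x xN /forall_inP H].
  by exists a, x; split => // b bS ba; have := H b bS; rewrite ba.
move/exists_inPn => H.
have {}H : forall a x, a \in S -> x \in Nr dd x0 a0 a ->
    exists b, [/\ b \in S, b != a & x \in Nr dd x0 a0 b].
  move=> a x aS xN; have := H a aS; move/exists_inPn => /(_ x xN).
  case/forall_inPn => b bS; rewrite negb_imply negbK => /andP[ba xb].
  by exists b.
case/set0Pn: S0 => a1 a1S.
pose A := fun v : 'I_n + 'I_m => match v with
  | inl x => [exists b in S, x \in Nr dd x0 a0 b] | inr a => a \in S end.
case: (@mindeg2_cycle _ (er dd x0 a0) A (inr a1) (@er_sym _ _ _ dd x0 a0)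
        (@er_irr _ _ _ dd x0 a0) a1S).
- case=> [x|a] /=.
  + case/exists_inP => b bS xb.
    have [b' [b'S b'b xb']] := H b x bS xb.
    exists (inr b), (inr b'); split => //.
    by apply/eqP => -[] bb; rewrite bb eqxx in b'b.
  + move=> aS; have [x1 [x2 [d x1N x2N]]] := Nr_two x0 a0 k3 (inj a).
    exists (inl x1), (inl x2); split => //=.
    * by apply/exists_inP; exists a.
    * by apply/exists_inP; exists a.
- by move=> c hc; case: (nocyc c hc).
Qed.

Lemma sdr n m k (dd : 'I_m -> 'I_k -> 'I_n) x0 a0 :
  (3 <= k)%N -> (forall a, injective (dd a)) ->
  (forall c, ~ [/\ uniq c, (3 <= size c)%N & cycle (er dd x0 a0) c]) ->
  forall S : {set 'I_m}, exists f : 'I_m -> 'I_n,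
    (forall a, a \in S -> f a \in Nr dd x0 a0 a) /\ {in S &, injective f}.
Proof.
move=> k3 inj nocyc S.
elim: {S}_.+1 {-2}S (ltnSn #|S|) => // N IH S Slt.
case: (eqVneq S set0) => [->|S0].
  by exists (fun _ => x0); split => [a|a b]; rewrite inE.
have [a [x [aS xN xpriv]]] := private_nb k3 inj nocyc S0.
have [|f [fN finj]] := IH (S :\ a).
  by rewrite -ltnS (leq_trans _ Slt) // (cardsD1 a S) aS.
exists (fun b => if b == a then x else f b); split.
  move=> b bS; case: eqP => [->//|/eqP ba]; apply: fN.
  by rewrite !inE ba.
move=> b c bS cS /=.
case: (eqVneq b a) => [->|ba]; case: (eqVneq c a) => [->|ca] //.
- move=> xf; have : f c \in Nr dd x0 a0 c by apply: fN; rewrite !inE ca cS.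
  by rewrite -xf (negbTE (xpriv c cS ca)).
- move=> xf; have : f b \in Nr dd x0 a0 b by apply: fN; rewrite !inE ba bS.
  by rewrite xf (negbTE (xpriv b bS ba)).
- by apply: finj; rewrite !inE ?ba ?ca.
Qed.


Lemma psi_tau_pos (R : rcfType) (k : nat) (lam : R) (tau sigma : Sig k) (i : 'I_k) :
  0 < lam -> sigma i = tau i -> 0 < psi_tau lam tau sigma.
Proof.
move=> lam0 st; rewrite /psi_tau ffunE [\prod_(_ < _) _](bigD1 i) //= st.
have -> : (tau i == ~~ tau i) = false by case: (tau i).
rewrite mul0r subr0 mulr1; exact: exprn_gt0.
Qed.

Lemma uni_main (R : rcfType) (k : nat) (lam : R) :
  (3 <= k)%N -> 0 < lam -> UNI k lam.
Proof.
move=> k3 lam0 n m psi dd hsupp inj [_ [[c cyc] cuniq]].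
have [tau htau] : exists tau : 'I_m -> Sig k, forall a, psi_tau lam (tau a) = psi a.
  have H a : exists t, psi_tau lam t == psi a.
    by have [t ht] := Pk_supp (hsupp a); exists t; apply/eqP.
  by exists (fun a => xchoose (H a)) => a; apply/eqP; apply: (xchooseP (H a)).
case: cyc => [cu csz ccyc].
have [x0 [a0 ein]] : exists x0 a0, [set inl x0; inr a0] \in cycle_edges c.
  have edgeP (u v : 'I_n + 'I_m) : fg_adj dd u v ->
      exists x a, [set u; v] = [set inl x; inr a].
    case: u v => [x|a] [y|b] //= _; first by exists x, b.
    by exists y, a; rewrite setUC.
  case: c cu csz ccyc => // v0 c' cu csz ccyc.
  have v0c : v0 \in v0 :: c' by rewrite inE eqxx.
  have [x [a E]] := edgeP _ _ (next_cycle ccyc v0c).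
  by exists x, a; apply/imsetP; exists v0.
have nocyc : forall c', ~ [/\ uniq c', (3 <= size c')%N & cycle (er dd x0 a0) c'].
  move=> c' [cu' csz' ccyc'].
  have cy' : is_graph_cycle (fg_adj dd) c'.
    by split => //; apply: sub_cycle ccyc'; apply: er_sub.
  have := cuniq c c' (And3 cu csz ccyc) cy'.
  by move=> E; move: ein; rewrite E (negbTE (er_edge ccyc')).
have [f [fN finj]] := sdr k3 inj nocyc [set: 'I_m].
have fc a : exists i, f a == dd a i.
  have := fN a (in_setT a); rewrite inE => /andP[/codomP [i ->] _]; by exists i.
pose idx a := xchoose (fc a).
have idxE a : f a = dd a (idx a) by apply/eqP; apply: (xchooseP (fc a)).
pose sigma v := if [pick a | f a == v] is Some a then tau a (idx a) else true.
exists sigma; apply: prodr_gt0 => a _.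
rewrite -htau; apply: (psi_tau_pos _ (i := idx a)) => //.
rewrite ffunE /sigma -idxE; case: pickP => [b /eqP fb|/(_ a)]; last by rewrite eqxx.
by rewrite (finj b a) ?inE.
Qed.

Theorem mainTheorem15 (k : nat) (R : rcfType) (lam : R) :
  (3 <= k)%N -> 0 < lam < 1 ->
  (1 - lam) * (1 + lam) ^+ k.-1 - 1 = 0 ->
  SYM k lam /\ BAL k lam /\ MIN k lam /\ UNI k lam.
Proof.
move=> k3 hl H.
have l0 : 0 < lam by case/andP: hl.
split; [split | split; [exact: bal_main | split; [exact: min_main | exact: uni_main]]].
- by apply: sym1 => //; apply: leq_trans k3.
- by move=> psi th; apply: Pk_perm.
Qed.
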